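(* Let $X\sim \mathrm{Po}(\lambda)$ with $P(X=k)=e^{-\lambda}\lambda^k/k!$ and $Y\sim\mathrm{Ge}(p)$ with $P(Y=k)=q^kp$, $k\in\mathbb{Z}_+$, where $p\in(0,1]$ and $q=1-p$, and assume $X$ and $Y$ are independent. Then a Stein operator for $X+Y$ is $$\bar{\mathscr{A}}_{X+Y}h(j)=\Big(\lambda+\frac{q}{p}\Big)h(j+1)-j\,h(j)+\sum_{k=0}^{\infty}\sum_{l=1}^{k}q^{k+1}\,\Delta h(j+l),\qquad j\in\mathbb{Z}_+,$$ that is, $\mathbb{E}[\bar{\mathscr{A}}_{X+Y}h(X+Y)]=0$ for all $h\in H_{X+Y}$.
   Context: $\Delta h(j)=h(j+1)-h(j)$ is the forward difference. $H$ denotes the set of bounded functions $h:\mathbb{Z}_+\to\mathbb{R}$, and for a random variable $\bar X$, $H_{\bar X}=\{h\in H: h(0)=0 \text{ and } h(j)=0 \text{ for } j\notin \mathrm{Supp}(\bar X)\}$. A Stein operator for $\bar X$ is an operator $\mathscr{A}_{\bar X}$ with $\mathbb{E}[\mathscr{A}_{\bar X}h(\bar X)]=0$ for the relevant class of $h$. *)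

(* Defs.v *)
From Stdlib Require Import Reals Arith Factorial.
From Coquelicot Require Import Coquelicot.
Open Scope R_scope.

Definition poisson_pmf (lam : R) (k : nat) : R :=
  exp (- lam) * lam ^ k / INR (Factorial.fact k).

Definition geom_pmf (p : R) (k : nat) : R := (1 - p) ^ k * p.

Definition sum_indep_pmf (f g : nat -> R) (j : nat) : R :=
  sum_f_R0 (fun i => f i * g (j - i)%nat) j.

Definition in_supp (f : nat -> R) (j : nat) : Prop := 0 < f j.

Definition bounded_fun (h : nat -> R) : Prop :=
  exists M : R, forall j : nat, Rabs (h j) <= M.

Definition H_of (f : nat -> R) (h : nat -> R) : Prop :=
  bounded_fun h /\ h 0%nat = 0 /\ (forall j : nat, ~ in_supp f j -> h j = 0).

Definition fdiff (h : nat -> R) (j : nat) : R := h (S j) - h j.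

Definition expect_is (f : nat -> R) (g : nat -> R) (v : R) : Prop :=
  is_series (fun j => f j * g j) v.

Fixpoint sum_1_to (k : nat) (F : nat -> R) : R :=
  match k with
  | O => 0
  | S k' => sum_1_to k' F + F (S k')
  end.

Definition stein_op_PoGe (lam p : R) (h : nat -> R) (j : nat) : R :=
  let q := 1 - p in
  (lam + q / p) * h (S j) - INR j * h j
  + Series (fun k : nat =>
       sum_1_to k (fun l => q ^ (k + 1) * fdiff h (j + l)%nat)).

(* Main.v *)
Require Import Defs.
From Stdlib Require Import Reals Arith Factorial Lra Lia.
From Coquelicot Require Import Coquelicot.
Open Scope R_scope.

Definition fPG (lam p : R) := sum_indep_pmf (poisson_pmf lam) (geom_pmf p).

Fixpoint dseq (q : R) (f : nat -> R) (n : nat) : R :=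
  match n with O => f O | S m => q * dseq q f m + f (S m) end.

Lemma P_rec lam n : poisson_pmf lam (S n) * INR (S n) = lam * poisson_pmf lam n.
Proof.
  unfold poisson_pmf. rewrite fact_simpl, mult_INR. simpl pow.
  assert (INR (fact n) <> 0) by apply INR_fact_neq_0.
  assert (INR (S n) <> 0) by (apply not_0_INR; lia).
  field; auto.
Qed.

Lemma f0 lam p : fPG lam p 0 = poisson_pmf lam 0 * p.
Proof. unfold fPG, sum_indep_pmf, geom_pmf. simpl. ring. Qed.

Lemma f_rec lam p n : fPG lam p (S n) = poisson_pmf lam (S n) * p + (1-p) * fPG lam p n.
Proof.
  unfold fPG, sum_indep_pmf. rewrite tech5, Nat.sub_diag.
  assert (H : sum_f_R0 (fun i => poisson_pmf lam i * geom_pmf p (S n - i)) n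
     = (1-p) * sum_f_R0 (fun i => poisson_pmf lam i * geom_pmf p (n - i)) n).
  { rewrite scal_sum. apply sum_eq. intros i Hi. rewrite Nat.sub_succ_l by lia.
    unfold geom_pmf. simpl. ring. }
  rewrite H. unfold geom_pmf. simpl. ring.
Qed.

Lemma E_id lam p n : INR (S n) * fPG lam p (S n) = lam * fPG lam p n + (1-p) * dseq (1-p) (fPG lam p) n.
Proof.
  induction n as [|n IH].
  - rewrite f_rec, f0. simpl dseq. rewrite f0.
    pose proof (P_rec lam 0) as H. simpl INR in *.
    assert (H1 : poisson_pmf lam 1 = lam * poisson_pmf lam 0) by lra.
    rewrite H1. ring.
  - replace (INR (S (S n)) * fPG lam p (S (S n))) with
      (p * (poisson_pmf lam (S (S n)) * INR (S (S n))) + (1-p) * (INR (S n) * fPG lam p (S n)) + (1-p) * fPG lam p (S n))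
      by (rewrite (f_rec lam p (S n)), (S_INR (S n)); ring).
    rewrite P_rec, IH. cbn [dseq]. rewrite (f_rec lam p n). ring.
Qed.

Lemma sum_1_to_tel (h : nat -> R) c j k :
  sum_1_to k (fun l => c * fdiff h (j + l)%nat) = c * (h (S (j + k)) - h (S j)).
Proof.
  induction k; cbn [sum_1_to].
  - rewrite Nat.add_0_r; ring.
  - rewrite IHk. unfold fdiff. rewrite Nat.add_succ_r. ring.
Qed.

Definition aS (q : R) (h : nat -> R) (j k : nat) : R := q ^ (k + 1) * h (S (j + k)).
Definition Sg (q : R) (h : nat -> R) (j : nat) : R := Series (aS q h j).

Lemma geom1 q c : 0 <= q < 1 -> is_series (fun k => q ^ (k+1) * c) (c * (q / (1 - q))).
Proof.
  intros Hq.
  assert (Hg := is_series_geom q ltac:(rewrite Rabs_right; lra)).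
  apply (is_series_scal_l (c * q)) in Hg.
  eapply is_series_ext; [|
  replace (c * (q / (1 - q))) with (scal (c*q) (/ (1 - q))) by (unfold scal; simpl; unfold mult; simpl; field; lra);
  exact Hg].
  intros n. unfold scal; simpl; unfold mult; simpl. rewrite pow_add. ring.
Qed.

Lemma aS_ex q h M j : 0 <= q < 1 -> (forall j, Rabs (h j) <= M) ->
  ex_series (fun k => Rabs (aS q h j k)) /\ ex_series (aS q h j).
Proof.
  intros Hq HM.
  assert (Hb : ex_series (fun k => q ^ (k+1) * M)) by (eexists; apply geom1; auto).
  assert (Hle : forall n, Rabs (aS q h j n) <= q^(n+1) * M).
  { intros n. unfold aS. rewrite Rabs_mult, (Rabs_right (q ^ _)) by (apply Rle_ge, pow_le; lra).
    apply Rmult_le_compat_l; [apply pow_le; lra| apply HM]. }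
  split; apply (@ex_series_le R_AbsRing R_CompleteNormedModule _ (fun k => q ^ (k+1) * M)); auto;
    intros n; change (norm ?x) with (Rabs x); try rewrite Rabs_Rabsolu; auto.
Qed.

Lemma Sg_bound q h M j : 0 <= q < 1 -> (forall j, Rabs (h j) <= M) ->
  Rabs (Sg q h j) <= M * (q / (1 - q)).
Proof.
  intros Hq HM. destruct (aS_ex q h M j Hq HM) as [Ha1 Ha2].
  unfold Sg. eapply Rle_trans; [apply Series_Rabs; auto|].
  rewrite <- (is_series_unique _ _ (geom1 q M Hq)).
  apply Series_le; [| eexists; apply geom1; auto].
  intros n; split; [apply Rabs_pos|]. unfold aS. rewrite Rabs_mult, (Rabs_right (q ^ _)) by (apply Rle_ge, pow_le; lra).
    apply Rmult_le_compat_l; [apply pow_le; lra| apply HM].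
Qed.

Lemma Sg_rec q h M j : 0 <= q < 1 -> (forall j, Rabs (h j) <= M) ->
  Sg q h j = q * h (S j) + q * Sg q h (S j).
Proof.
  intros Hq HM. destruct (aS_ex q h M j Hq HM) as [_ Ha].
  unfold Sg. rewrite (Series_incr_1 _ Ha).
  rewrite (Series_ext _ (fun k => q * aS q h (S j) k)).
  - rewrite Series_scal_l. unfold aS at 1. rewrite Nat.add_0_r. simpl. ring.
  - intros k. unfold aS. replace (S k + 1)%nat with (S (S k)) by lia. replace (j + S k)%nat with (S (j + k)) by lia. replace (k + 1)%nat with (S k) by lia. simpl. ring.
Qed.

Lemma op_eq lam p h M j : 0 < p <= 1 -> (forall j, Rabs (h j) <= M) ->
  stein_op_PoGe lam p h j = lam * h (S j) - INR j * h j + Sg (1-p) h j.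
Proof.
  intros Hp HM. assert (Hq : 0 <= 1 - p < 1) by lra.
  destruct (aS_ex (1-p) h M j Hq HM) as [_ Ha].
  unfold stein_op_PoGe.
  rewrite (Series_ext _ (fun k => aS (1-p) h j k - (1-p)^(k+1) * h (S j))).
  2:{ intros k. rewrite sum_1_to_tel. unfold aS. ring. }
  rewrite Series_minus; [| auto | eexists; apply geom1; auto].
  rewrite (is_series_unique _ _ (geom1 (1-p) (h (S j)) Hq)).
  unfold Sg. field. lra.
Qed.

Lemma psum lam p h M N : 0 < p <= 1 -> (forall j, Rabs (h j) <= M) ->
  sum_f_R0 (fun j => fPG lam p j * (lam * h (S j) - INR j * h j + Sg (1-p) h j)) N
  = lam * fPG lam p N * h (S N) + dseq (1-p) (fPG lam p) N * Sg (1-p) h N.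
Proof.
  intros Hp HM. assert (Hq : 0 <= 1 - p < 1) by lra.
  induction N as [|N IH].
  - simpl. ring.
  - rewrite tech5, IH. rewrite (Sg_rec (1-p) h M N Hq HM).
    replace (fPG lam p (S N) * (lam * h (S (S N)) - INR (S N) * h (S N) + Sg (1 - p) h (S N)))
      with (fPG lam p (S N) * lam * h (S (S N)) + fPG lam p (S N) * Sg (1 - p) h (S N)
            - (INR (S N) * fPG lam p (S N)) * h (S N)) by ring.
    rewrite E_id. cbn [dseq]. ring.
Qed.

Lemma P_nonneg lam n : 0 < lam -> 0 <= poisson_pmf lam n.
Proof.
  intros. unfold poisson_pmf. unfold Rdiv. apply Rmult_le_pos; [apply Rmult_le_pos|].
  - left; apply exp_pos.
  - apply pow_le; lra.
  - left; apply Rinv_0_lt_compat, INR_fact_lt_0.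
Qed.

Lemma P_bound lam r n : 0 < lam -> 0 < r ->
  poisson_pmf lam n <= exp (- lam) * exp (lam / r) * r ^ n.
Proof.
  intros Hl Hr. set (t := fun k => (lam / r) ^ k / INR (fact k)).
  assert (Ht : forall k, 0 <= t k).
  { intros k. unfold t, Rdiv. apply Rmult_le_pos; [apply pow_le|left; apply Rinv_0_lt_compat, INR_fact_lt_0].
    apply Rmult_le_pos; [lra| left; apply Rinv_0_lt_compat; lra]. }
  assert (Htn : t n <= exp (lam / r)).
  { eapply Rle_trans; [| apply (exp_ge_taylor (lam / r) n); left; apply Rdiv_lt_0_compat; lra].
    change (t n <= sum_f_R0 t n). destruct n as [|m]; [simpl; lra|]. rewrite tech5.
    pose proof (cond_pos_sum t m Ht). fold t. lra. }
  unfold poisson_pmf.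
  replace (lam ^ n) with (r ^ n * (lam / r) ^ n)
    by (rewrite <- Rpow_mult_distr; f_equal; field; lra).
  replace (exp (- lam) * (r ^ n * (lam / r) ^ n) / INR (fact n)) with
    ((exp (- lam) * r ^ n) * t n) by (unfold t; field; apply INR_fact_neq_0).
  replace (exp (- lam) * exp (lam / r) * r ^ n) with ((exp (- lam) * r ^ n) * exp (lam / r)) by ring.
  apply Rmult_le_compat_l; auto.
  apply Rmult_le_pos; [left; apply exp_pos| apply pow_le; lra].
Qed.

Lemma f_bounds lam p : 0 < lam -> 0 < p <= 1 ->
  let r := 1 - p / 2 in let C := exp (- lam) * exp (lam / r) in
  let K1 := 2 * C * r in let K2 := 2 * K1 * r / p in
  forall n, 0 <= fPG lam p n <= K1 * r ^ n /\ 0 <= dseq (1-p) (fPG lam p) n <= K2 * r ^ n.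
Proof.
  intros Hl Hp r C K1 K2.
  assert (Hr : 0 < r) by (unfold r; lra).
  assert (HC : 0 < C) by (unfold C; apply Rmult_lt_0_compat; apply exp_pos).
  assert (HK1 : 0 <= K1) by (unfold K1; nra).
  assert (HK2 : K2 = K1 + K1 * (2 - 2 * p) / p) by (unfold K2, r; field; lra).
  assert (HK12 : K1 <= K2).
  { rewrite HK2. assert (0 <= K1 * (2 - 2 * p) / p); [|lra].
    unfold Rdiv. apply Rmult_le_pos; [nra| left; apply Rinv_0_lt_compat; lra]. }
  assert (Hf : forall n, 0 <= fPG lam p n <= K1 * r ^ n).
  { induction n as [|n IH].
    - rewrite f0. pose proof (P_bound lam r 0 Hl Hr). pose proof (P_nonneg lam 0 Hl).
      fold C in H. simpl in *. split; [nra|]. unfold K1, r in *. nra.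
    - rewrite f_rec. pose proof (P_bound lam r (S n) Hl Hr). pose proof (P_nonneg lam (S n) Hl).
      fold C in H. split; [nra|].
      apply Rle_trans with (C * r ^ S n * p + (1 - p) * (K1 * r ^ n)).
      + apply Rplus_le_compat; [apply Rmult_le_compat_r; lra| apply Rmult_le_compat_l; lra].
      + right. unfold K1, r. simpl. field. }
  intros n. split; auto.
  induction n as [|n IH].
  - cbn [dseq]. pose proof (Hf 0%nat). simpl in *. lra.
  - cbn [dseq]. pose proof (Hf (S n)). split; [nra|].
    apply Rle_trans with ((1-p) * (K2 * r ^ n) + K1 * r ^ S n).
    + apply Rplus_le_compat; [apply Rmult_le_compat_l; lra| lra].
    + right. unfold K2, r. simpl. field. lra.
Qed.

Theorem proposition3p2 (lam p : R) (Hlam : 0 < lam) (Hp0 : 0 < p) (Hp1 : p <= 1)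
  (h : nat -> R) :
  H_of (sum_indep_pmf (poisson_pmf lam) (geom_pmf p)) h ->
  expect_is (sum_indep_pmf (poisson_pmf lam) (geom_pmf p))
            (stein_op_PoGe lam p h) 0.
Proof.
  intros [[M HM] _].
  assert (Hp : 0 < p <= 1) by lra. assert (Hq : 0 <= 1 - p < 1) by lra.
  assert (HM0 : 0 <= M) by (eapply Rle_trans; [apply Rabs_pos| apply (HM 0%nat)]).
  pose proof (f_bounds lam p Hlam Hp) as FB. simpl in FB.
  set (r := 1 - p / 2) in FB. set (C := exp (- lam) * exp (lam / r)) in FB.
  set (K1 := 2 * C * r) in FB. set (K2 := 2 * K1 * r / p) in FB.
  set (B := M * ((1 - p) / (1 - (1 - p)))).
  assert (HB : forall j, Rabs (Sg (1-p) h j) <= B) by (intros; apply Sg_bound; auto).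
  set (W := lam * K1 * M + K2 * B).
  unfold expect_is.
  change (is_lim_seq (sum_n (fun j => sum_indep_pmf (poisson_pmf lam) (geom_pmf p) j *
        stein_op_PoGe lam p h j)) 0).
  apply is_lim_seq_abs_0.
  apply is_lim_seq_le_le with (u := fun _ => 0) (w := fun n => W * r ^ n).
  2: apply is_lim_seq_const.
  2: { replace (Finite 0) with (Rbar_mult W 0) by (simpl; f_equal; ring).
       apply is_lim_seq_scal_l, is_lim_seq_geom. unfold r. rewrite Rabs_right; lra. }
  intros n. split; [apply Rabs_pos|].
  rewrite sum_n_Reals.
  rewrite (sum_eq _ (fun j => fPG lam p j * (lam * h (S j) - INR j * h j + Sg (1-p) h j)))
    by (intros; unfold fPG; rewrite (op_eq lam p h M); auto).
  rewrite (psum lam p h M n Hp HM).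
  destruct (FB n) as [[Hf1 Hf2] [Hd1 Hd2]].
  eapply Rle_trans; [apply Rabs_triang|]. rewrite !Rabs_mult.
  rewrite (Rabs_right lam), (Rabs_right (fPG _ _ _)), (Rabs_right (dseq _ _ _)) by lra.
  unfold W. rewrite Rmult_plus_distr_r.
  apply Rplus_le_compat.
  - replace (lam * K1 * M * r ^ n) with (lam * (K1 * r ^ n) * M) by ring.
    apply Rmult_le_compat; try apply Rabs_pos; [nra| | auto].
    apply Rmult_le_compat_l; lra.
  - replace (K2 * B * r ^ n) with ((K2 * r ^ n) * B) by ring.
    apply Rmult_le_compat; try apply Rabs_pos; auto.
Qed.
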